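(* Let $n\ge1$ and $\vec v=(v_1,\dots,v_n)\in\mathbb N_b^n$. Let $k$ be the largest index with $v_k=1$, and put $\vec v_l=(v_1,\dots,v_{k-1})$ and $\vec v_r'=(v_{k+1}-k,\dots,v_n-k)$. Then $\vec v\in\hat N^n$ if and only if $\vec v_l\in\hat N^{k-1}$ and $\vec v_r'\in\hat N^{n-k}$ (here $\hat N^0$ consists only of the empty vector, and a vector with a non-positive coordinate is not in any $\hat N^j$).
   Context: $\mathbb N_b^n=\{(v_1,\dots,v_n)\in\mathbb N^n:\ 1\le v_i\le i\}$. $Y_n$ is the set of planar rooted binary trees with $n$ internal vertices up to isotopy. A complete expression in $x_1,\dots,x_{n+1}$ is a full binary parenthesization of $x_1\cdots x_{n+1}$ (every product of two factors, including the outermost, in parentheses); trees correspond bijectively to complete expressions via $|\mapsto x_1$, $\tau_1\vee\tau_2\mapsto(E_1E_2)$ with consecutive relabelling, where $\tau_1\vee\tau_2$ is the tree with a new root, left subtree $\tau_1$, right subtree $\tau_2$. The name of $\tau\in Y_n$ is the vector $\vec v\in\mathbb N^n$ with $v_i=i$ if at least one left parenthesis stands immediately left of $x_i$ in the complete expression; otherwise the rightmost of the right parentheses immediately following $x_i$ matches a left parenthesis in the run immediately preceding some $x_j$, and $v_i=j$. $\hat N^n$ is the set of names of trees of $Y_n$ ($n\ge1$), and $\hat N^0=\{()\}$ is the name of the trivial tree $|$. *)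

(* Defs.v *)
From mathcomp Require Import all_boot.
Set Implicit Arguments. Unset Strict Implicit. Unset Printing Implicit Defensive.

(* Planar rooted binary trees, up to isotopy = this inductive type. *)
Inductive tree : Type := Leaf | Node of tree & tree.

Fixpoint internal (t : tree) : nat :=
  match t with Leaf => 0 | Node l r => (internal l + internal r).+1 end.

Fixpoint leaves (t : tree) : nat :=
  match t with Leaf => 1 | Node l r => leaves l + leaves r end.

Inductive tok : Type := LP | RP | X of nat.

(* complete expression of t, with variables x_(off+1), ..., x_(off + leaves t);
   |  |-> x_1 ,  t1 \/ t2 |-> ( E1 E2 ) with consecutive relabelling *)
Fixpoint expr_off (t : tree) (off : nat) : seq tok :=
  match t with
  | Leaf => [:: X off.+1]
  | Node l r => LP :: expr_off l off ++ expr_off r (off + leaves l) ++ [:: RP]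
  end.

Definition expr (t : tree) : seq tok := expr_off t 0.

Definition is_LP (a : tok) : bool := if a is LP then true else false.
Definition is_RP (a : tok) : bool := if a is RP then true else false.

Definition balanced (w : seq tok) : Prop :=
  count is_LP w = count is_RP w /\
  forall p, p <= size w -> count is_RP (take p w) <= count is_LP (take p w).

Definition matches (s : seq tok) (m q : nat) : Prop :=
  m < q /\ q < size s /\ nth RP s m = LP /\ nth LP s q = RP /\
  balanced (drop m.+1 (take q s)).

(* v (a seq of length n, v_i = nth 0 v i.-1) is the name of t, t with n internal vertices *)
Definition name_of (t : tree) (v : seq nat) : Prop :=
  let s := expr t in
  size v = internal t /\
  forall i p, 1 <= i <= internal t -> nth LP s p = X i ->
    ((0 < p /\ nth RP s p.-1 = LP) -> nth 0 v i.-1 = i) /\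
    (~ (0 < p /\ nth RP s p.-1 = LP) ->
       (* q: the rightmost of the right parentheses immediately following x_i;
          m: its matching left parenthesis, lying in the run of left
          parentheses immediately preceding x_j (at position pj) *)
       exists q m j pj,
         p < q /\ (forall r, p < r <= q -> nth LP s r = RP) /\
         nth LP s q.+1 <> RP /\
         matches s m q /\
         nth LP s pj = X j /\ m < pj /\
         (forall r, m <= r < pj -> nth RP s r = LP) /\
         nth 0 v i.-1 = j).

Definition hatN (n : nat) (v : seq nat) : Prop :=
  exists t : tree, internal t = n /\ name_of t v.

Definition Nb (n : nat) (v : seq nat) : Prop :=
  size v = n /\ forall i, 1 <= i <= n -> 1 <= nth 0 v i.-1 <= i.

(* Main.v *)
From HB Require Import structures.
Require Import Defs.
From mathcomp Require Import all_boot.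
From mathcomp Require Import zify.
From Stdlib Require Import Classical.
Set Implicit Arguments. Unset Strict Implicit. Unset Printing Implicit Defensive.

Definition tok_eqb (x y : tok) := match x, y with
  | LP, LP => true | RP, RP => true | X a, X b => a == b | _, _ => false end.
Lemma tok_eqP : Equality.axiom tok_eqb.
Proof.
case=> [||a] [||b] /=; try (by constructor).
by apply: (iffP eqP) => [->|[]].
Qed.
HB.instance Definition _ := hasDecEq.Build tok tok_eqP.

Lemma leavesE t : leaves t = (internal t).+1.
Proof. by elim: t => //= l IHl r IHr; rewrite IHl IHr addSn addnS. Qed.

Definition shx a (x : tok) := if x is X j then X (j + a) else x.

Lemma expr_off_shift t off a : expr_off t (off + a) = map (shx a) (expr_off t off).
Proof.
elim: t off => [|l IHl r IHr] off /=; first by rewrite addSn.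
by rewrite !map_cat /= IHl addnAC IHr.
Qed.

Lemma exprB r a : expr_off r a = map (shx a) (expr_off r 0).
Proof. by rewrite -expr_off_shift add0n. Qed.

Lemma memX t off j : X j \in expr_off t off -> off < j <= off + leaves t.
Proof.
elim: t off => [|l IHl r IHr] off /=.
  by rewrite inE => /eqP [->]; lia.
rewrite !(inE, mem_cat) /= => /or3P [H|H|//].
  by have := IHl _ H; lia.
by have := IHr _ H; lia.
Qed.

Lemma X_occ t off i : off < i <= off + leaves t -> X i \in expr_off t off.
Proof.
elim: t off => [|l IHl r IHr] off /=.
  by move=> H; rewrite inE; apply/eqP; congr X; lia.
move=> H; rewrite inE mem_cat mem_cat; apply/orP; right.
case: (leqP i (off + leaves l)) => Hi.
  by rewrite IHl //; lia.
by rewrite IHr ?orbT //; lia.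
Qed.

Lemma nth_X_lt (s : seq tok) p j : nth LP s p = X j -> p < size s.
Proof. by rewrite ltnNge; case: leqP => // H; rewrite nth_default. Qed.

Lemma nthA (A C : seq tok) d x : x < size A -> nth d (LP :: A ++ C) x.+1 = nth d A x.
Proof. by move=> Hx /=; rewrite nth_cat Hx. Qed.

Lemma nthB (A B : seq tok) d x : x < size B ->
  nth d (LP :: A ++ B ++ [:: RP]) (size A + x).+1 = nth d B x.
Proof. by move=> Hx /=; rewrite nth_cat ltnNge leq_addr /= addKn nth_cat Hx. Qed.

Lemma Xinv (A B : seq tok) p j : nth LP (LP :: A ++ B ++ [:: RP]) p = X j ->
  (exists2 p', p = p'.+1 & p' < size A /\ nth LP A p' = X j) \/
  (exists2 p', p = (size A + p').+1 & p' < size B /\ nth LP B p' = X j).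
Proof.
case: p => [|p] /= H; first discriminate.
move: H; rewrite nth_cat; case: ltnP => H1 H.
  by left; exists p.
rewrite nth_cat in H; move: H; case: ltnP => H2 H.
  by right; exists (p - size A); [rewrite subnKC|].
by move: H; case: (p - size A - size B) => [|k] /= H; [|rewrite nth_nil in H]; discriminate.
Qed.

Lemma L3 t off p j : nth LP (expr_off t off) p = X j -> j < off + leaves t ->
  exists p2 j2, p < p2 /\ nth LP (expr_off t off) p2 = X j2.
Proof.
elim: t off p => [|l IHl r IHr] off p /=.
  case: p => [[<-] H|p]; first lia. by case: p => [|?] /= H; rewrite ?nth_nil in H; discriminate.
move=> /Xinv [[p' -> [H1 H2]] Hj | [p' -> [H1 H2]] Hj].
  case: (ltnP j (off + leaves l)) => Hj2.
    have [p2 [j2 [Hp2 E]]] := IHl _ _ H2 Hj2.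
    exists p2.+1, j2; split => //; rewrite nthA //; exact: nth_X_lt E.
  have /(nthP LP) [q Hq Eq] := @X_occ r (off + leaves l) (off + leaves l).+1 ltac:(rewrite leavesE; lia).
  exists (size (expr_off l off) + q).+1, (off + leaves l).+1; split; first lia.
  by rewrite nthB.
have [p2 [j2 [Hp2 E]]] := IHr _ _ H2 ltac:(lia).
exists (size (expr_off l off) + p2).+1, j2; split; first lia.
by rewrite nthB //; exact: nth_X_lt E.
Qed.

Lemma headB t off : nth LP (expr_off t off) 0 <> RP.
Proof. by case: t => [|l r] /= H; discriminate. Qed.

Lemma lastE t off : last LP (expr_off t off) != LP.
Proof. case: t => [|l r] /=; first by []. by rewrite !last_cat. Qed.

Lemma Lfirst t off : exists c rest, expr_off t off = nseq c LP ++ X off.+1 :: rest.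
Proof.
elim: t off => [|l IHl r _] off /=; first by exists 0, [::].
have [c [rest ->]] := IHl off.
exists c.+1, (rest ++ expr_off r (off + leaves l) ++ [:: RP]).
by rewrite /= -(@catA tok).
Qed.

Lemma Llast t off : exists w d, expr_off t off = w ++ X (off + leaves t) :: nseq d RP /\
  X (off + leaves t) \notin w /\ (internal t = 0 -> w = [::]) /\
  (0 < internal t -> last LP w != LP /\ 0 < d).
Proof.
elim: t off => [|l _ r IHr] off.
  by exists [::], 0; rewrite /= addn1.
case: r IHr => [|r1 r2] IHr.
  exists (LP :: expr_off l off), 1; split; first by rewrite /= addnA addn1.
  split.
    apply/negP; rewrite inE => /orP [//|/memX]; rewrite /=; lia.
  split => // _; split => //=; exact: lastE.
have [wr [dr [E [N [_ L]]]]] := IHr (off + leaves l).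
have {}L := L isT.
exists (LP :: expr_off l off ++ wr), (dr + 1).
split.
  change (expr_off (Node l (Node r1 r2)) off) with (LP :: expr_off l off ++ expr_off (Node r1 r2) (off + leaves l) ++ [:: RP]).
  change (leaves (Node l (Node r1 r2))) with (leaves l + leaves (Node r1 r2)).
  by rewrite E nseqD addnA /= -!catA.
split.
  apply/negP; change (leaves (Node l (Node r1 r2))) with (leaves l + leaves (Node r1 r2)); rewrite addnA inE mem_cat => /orP [//|/orP [/memX|]]; first by rewrite /= !leavesE; lia.
  by rewrite (negbTE N).
split => // _; split; last by lia.
move: L.1; case: wr {E N L} => [//|y wr] H; by rewrite /= last_cat.
Qed.

Lemma bal_cat w1 w2 : balanced w1 -> balanced w2 -> balanced (w1 ++ w2).
Proof.
move=> [c1 P1] [c2 P2]; split; first by rewrite !count_cat c1 c2.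
move=> p Hp; rewrite take_cat; case: ltnP => H.
  by apply: P1; exact: ltnW.
rewrite !count_cat c1 leq_add2l; apply: P2; rewrite size_cat in Hp; lia.
Qed.

Lemma bal_wrap w : balanced w -> balanced (LP :: w ++ [:: RP]).
Proof.
move=> [c P]; split.
  by rewrite /= !count_cat /= c; lia.
case=> [|p] Hp //=.
rewrite take_cat; case: ltnP => H.
  by have := P p (ltnW H); lia.
rewrite !count_cat c; case: (p - size w) => [|k] /=; lia.
Qed.

Lemma bal_expr t off : balanced (expr_off t off).
Proof.
elim: t off => [|l IHl r IHr] off.
  by split => // -[|[|p]].
by rewrite /= catA; apply: bal_wrap; apply: bal_cat.
Qed.

Lemma cntL a w : count is_LP (map (shx a) w) = count is_LP w.
Proof. by elim: w => //= x w ->; case: x. Qed.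
Lemma cntR a w : count is_RP (map (shx a) w) = count is_RP w.
Proof. by elim: w => //= x w ->; case: x. Qed.

Lemma bal_map a w : balanced w -> balanced (map (shx a) w).
Proof.
move=> [c P]; split; first by rewrite cntL cntR.
by move=> p; rewrite size_map -map_take cntL cntR; apply: P.
Qed.

Lemma matches_lt (s : seq tok) m1 m2 q : m1 < m2 -> matches s m1 q -> matches s m2 q -> False.
Proof.
move=> Hm [H1 [Hq [Hn1 [Hq1 [C1 P1]]]]] [H2 [_ [Hn2 [_ [C2 P2]]]]].
have Sw : size (take q s) = q by rewrite size_take Hq.
set w := take q s in Sw C1 P1 C2 P2.
set D1 := drop m1.+1 w in C1 P1.
have E : D1 = take (m2 - m1) D1 ++ drop m2.+1 w.
  rewrite -{1}(cat_take_drop (m2 - m1) D1) /D1 drop_drop.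
  by have -> : m2 - m1 + m1.+1 = m2.+1 by lia.
have Hk : (m2 - m1).-1 < size D1 by rewrite size_drop Sw; lia.
have T : take (m2 - m1) D1 = rcons (take (m2 - m1).-1 D1) LP.
  have E2 : m2 - m1 = ((m2 - m1).-1).+1 by lia.
  rewrite {1}E2 (take_nth RP) //; congr rcons.
  rewrite nth_drop /w nth_take; last by lia.
  by have -> : m1.+1 + (m2 - m1).-1 = m2 by lia.
have Hp := P1 (m2 - m1).-1 (ltnW Hk).
rewrite E T -cats1 !count_cat C2 /= in C1; lia.
Qed.

Lemma matches_uniq (s : seq tok) m1 m2 q : matches s m1 q -> matches s m2 q -> m1 = m2.
Proof.
move=> A B; case: (ltngtP m1 m2) => H //.
  by case: (matches_lt H A B).
by case: (matches_lt H B A).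
Qed.

Lemma q_uniq (s : seq tok) p q1 q2 : p < q1 -> p < q2 ->
  (forall r, p < r <= q1 -> nth LP s r = RP) -> (forall r, p < r <= q2 -> nth LP s r = RP) ->
  nth LP s q1.+1 <> RP -> nth LP s q2.+1 <> RP -> q1 = q2.
Proof.
move=> h1 h2 r1 r2 n1 n2; case: (ltngtP q1 q2) => H //.
  by case: n1; apply: r2; lia.
by case: n2; apply: r1; lia.
Qed.

Lemma pj_uniq (s : seq tok) m p1 p2 j1 j2 : nth LP s p1 = X j1 -> nth LP s p2 = X j2 ->
  m < p1 -> m < p2 -> (forall r, m <= r < p1 -> nth RP s r = LP) ->
  (forall r, m <= r < p2 -> nth RP s r = LP) -> j1 = j2.
Proof.
move=> e1 e2 h1 h2 r1 r2; case: (ltngtP p1 p2) => H.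
- have := r2 p1 ltac:(lia); rewrite (set_nth_default LP) ?e1 //; exact: nth_X_lt e1.
- have := r1 p2 ltac:(lia); rewrite (set_nth_default LP) ?e2 //; exact: nth_X_lt e2.
- by subst; rewrite e1 in e2; case: e2.
Qed.

Lemma name_unique t v w : name_of t v -> name_of t w -> v = w.
Proof.
move=> [Sv Nv] [Sw Nw]; apply: (@eq_from_nth _ 0); first by rewrite Sv Sw.
move=> x Hx; rewrite Sv in Hx.
have Hi : 1 <= x.+1 <= internal t by lia.
have /(nthP LP) [p Hp Ep] := @X_occ t 0 x.+1 ltac:(rewrite leavesE; lia).
have [A1 A2] := Nv _ _ Hi Ep; have [B1 B2] := Nw _ _ Hi Ep.
case: (classic (0 < p /\ nth RP (expr t) p.-1 = LP)) => C.
  by move: (A1 C) (B1 C) => /= -> ->.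
have [q1 [m1 [j1 [pj1 [a1 [a2 [a3 [a4 [a5 [a6 [a7 a8]]]]]]]]]]] := A2 C.
have [q2 [m2 [j2 [pj2 [b1 [b2 [b3 [b4 [b5 [b6 [b7 b8]]]]]]]]]]] := B2 C.
have Eq := q_uniq a1 b1 a2 b2 a3 b3; subst q2.
have Em := matches_uniq a4 b4; subst m2.
have Ej := pj_uniq a5 b5 a6 b6 a7 b7; idtac.
by rewrite /= in a8 Ej; rewrite a8 Ej.
Qed.

Lemma name_pos t v i : name_of t v -> 1 <= i <= internal t -> 0 < nth 0 v i.-1.
Proof.
move=> [Sv Nv] Hi.
have /(nthP LP) [p Hp Ep] := @X_occ t 0 i ltac:(rewrite leavesE; lia).
have [A1 A2] := Nv _ _ Hi Ep.
case: (classic (0 < p /\ nth RP (expr t) p.-1 = LP)) => C.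
  by rewrite A1 //; lia.
have [q1 [m1 [j1 [pj1 [a1 [a2 [a3 [a4 [a5 [a6 [a7 a8]]]]]]]]]]] := A2 C.
rewrite a8.
have : X j1 \in expr_off t 0 by rewrite -a5; apply: mem_nth; exact: nth_X_lt a5.
by move/memX; lia.
Qed.

Lemma first0 t off j : nth LP (expr_off t off) 0 = X j -> internal t = 0.
Proof. by case: t => //= l r H; discriminate. Qed.

Lemma Lbody t off : 0 < internal t -> exists W, expr_off t off = LP :: W ++ [:: RP] /\ balanced W.
Proof.
case: t => // l r _; exists (expr_off l off ++ expr_off r (off + leaves l)).
by rewrite /= catA; split => //; apply: bal_cat; apply: bal_expr.
Qed.

Lemma nameE l r vl vr : name_of l vl -> name_of r vr ->
  name_of (Node l r) (vl ++ 1 :: map (fun x => x + leaves l) vr).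
Proof.
move=> [Svl Nl] [Svr Nr]; split.
  by rewrite size_cat /= size_map Svl Svr addnS.
move=> i p Hi.
rewrite /= in Hi.
rewrite /expr [expr_off (Node _ _) _]/= add0n.
rewrite /expr in Nl Nr.
have La := leavesE l.
have Lr := leavesE r.
have lastA := lastE l 0.
have EB : expr_off r (leaves l) = map (shx (leaves l)) (expr_off r 0) by rewrite exprB.
have hB := @headB r (leaves l).
have HB1 : X (leaves l).+1 \in expr_off r (leaves l) by apply: X_occ; rewrite leavesE; lia.
set A := expr_off l 0 in Nl lastA *.
set B := expr_off r (leaves l) in EB hB HB1 *.
set R := expr_off r 0 in Nr EB *.
have SB : size B = size R by rewrite EB size_map.
have Hbpos : 0 < size B by move: HB1; case: (B).
move=> Hp.
case: (ltngtP i (leaves l)) => Hia.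
-
  have Hi' : 0 < i <= internal l by lia.
  case/Xinv: Hp => [[p' -> [Hp' Ep]] | [p' -> [Hp' Ep]]]; last first.
    exfalso; have : X i \in B by rewrite -Ep mem_nth.
    by move/memX; lia.
  have [H1 H2] := Nl i p' Hi' Ep.
  have Hlt : i.-1 < internal l by lia.
  rewrite nth_cat Svl Hlt.
  case: p' Hp' Ep H1 H2 => [|p'] Hp' Ep H1 H2.
    by have := first0 Ep; lia.
  split.
    move=> [_ HL]; apply: H1; split => //.
    by move: HL; rewrite nthA //; lia.
  move=> HN.
  have HN' : ~ (0 < p'.+1 /\ nth RP A p'.+1.-1 = LP).
    move=> [_ HL]; apply: HN; split => //.
    by rewrite nthA //; lia.
  have [q [m [j [pj [c1 [c2 [c3 [c4 [c5 [c6 [c7 c8]]]]]]]]]]] := H2 HN'.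
  case: c4 => [cm [cq [cnm [cnq cb]]]].
  have Hpj : pj < size A := nth_X_lt c5.
  exists q.+1, m.+1, j, pj.+1.
  split; first lia.
  split.
    move=> r0 Hr; have -> : r0 = r0.-1.+1 by lia.
    rewrite nthA; [apply: c2|]; lia.
  split.
    case: (ltnP q.+1 (size A)) => Hq1; first by rewrite nthA.
    have -> : q.+2 = (size A + 0).+1 by lia.
    by rewrite nthB.
  split.
    split; first lia.
    split; first by rewrite /= !size_cat /=; lia.
    split; first by rewrite nthA //; lia.
    split; first by rewrite nthA.
    by rewrite /= takel_cat; [|lia].
  split; first by rewrite nthA.
  split; first lia.
  split; last exact: c8.
  move=> r0 Hr; have -> : r0 = r0.-1.+1 by lia.
  rewrite nthA; [apply: c7|]; lia.
-
  have Hi' : 0 < i - leaves l <= internal r by lia.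
  case/Xinv: Hp => [[p' -> [Hp' Ep]] | [p' -> [Hp' Ep]]].
    exfalso; have : X i \in A by rewrite -Ep mem_nth.
    by move/memX; lia.
  rewrite EB (nth_map LP) in Ep; last by rewrite -SB.
  case E0 : (nth LP R p') Ep => [||j0] //= Ep.
  have Ej0 : j0 = i - leaves l by case: Ep; lia.
  rewrite Ej0 in E0.
  have [H1 H2] := Nr (i - leaves l) p' Hi' E0.
  have Ev : nth 0 (vl ++ 1 :: map (fun x => x + leaves l) vr) i.-1 =
            nth 0 vr (i - leaves l).-1 + leaves l.
    rewrite nth_cat Svl ltnNge (_ : internal l <= i.-1) /=; last by lia.
    have -> : i.-1 - internal l = ((i - leaves l).-1).+1 by lia.
    by rewrite /= (nth_map 0) // Svr; lia.
  rewrite Ev.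
  have T : forall d x, x < size R -> nth d (LP :: A ++ B ++ [:: RP]) (size A + x).+1 = shx (leaves l) (nth d R x).
    move=> d x Hx; rewrite nthB; last by rewrite SB.
    by rewrite EB (nth_map d).
  have F1 : (0 < (size A + p').+1 /\ nth RP (LP :: A ++ B ++ [:: RP]) (size A + p').+1.-1 = LP) ->
            (0 < p' /\ nth RP R p'.-1 = LP).
    move=> [_]; case: (posnP p') => Hp0.
      subst p'; rewrite addn0 /=.
      have SA : 0 < size A by case: (A) lastA.
      have -> : size A = (size A).-1.+1 by lia.
      rewrite nthA; last by lia.
      rewrite (set_nth_default LP); last by lia.
      rewrite nth_last => HL; by rewrite HL in lastA.
    have -> : (size A + p').+1.-1 = (size A + p'.-1).+1 by lia.
    rewrite T; last by lia.
    by case: (nth RP R p'.-1).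
  have F2 : (0 < p' /\ nth RP R p'.-1 = LP) ->
            (0 < (size A + p').+1 /\ nth RP (LP :: A ++ B ++ [:: RP]) (size A + p').+1.-1 = LP).
    move=> [Hp0 HL]; split => //.
    have -> : (size A + p').+1.-1 = (size A + p'.-1).+1 by lia.
    by rewrite T ?HL //; lia.
  split.
    by move=> /F1 /H1 ->; lia.
  move=> HN.
  have HN' : ~ (0 < p' /\ nth RP R p'.-1 = LP) by move=> /F2.
  have [q [m [j [pj [c1 [c2 [c3 [c4 [c5 [c6 [c7 c8]]]]]]]]]]] := H2 HN'.
  case: c4 => [cm [cq [cnm [cnq cb]]]].
  have Hpj : pj < size R := nth_X_lt c5.
  have [p2 [j2 [Hp2 E2]]] := L3 E0 ltac:(lia).
  have Hp2s : p2 < size R := nth_X_lt E2.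
  have Hq2 : q < p2.
    case: (ltnP q p2) => // H.
    by have := c2 p2 ltac:(lia); rewrite /R E2.
  exists (size A + q).+1, (size A + m).+1, (j + leaves l), (size A + pj).+1.
  split; first lia.
  split.
    move=> r0 Hr; have -> : r0 = (size A + (r0.-1 - size A)).+1 by lia.
    rewrite T; [rewrite c2 //; lia | lia].
  split.
    change (nth LP (LP :: A ++ B ++ [:: RP]) (size A + q).+2 <> RP).
    rewrite -addnS T; last by lia.
    by move: c3; case: (nth LP R q.+1).
  split.
    split; first lia.
    split; first by rewrite /= !size_cat /= SB; lia.
    split; first by rewrite T ?cnm //; lia.
    split; first by rewrite T ?cnq.
    rewrite /= take_cat ltnNge leq_addr /= addKn drop_cat ltnNge (_ : size A <= (size A + m).+1) /=; last by lia.
    have -> : (size A + m).+1 - size A = m.+1 by lia.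
    rewrite takel_cat; last by lia.
    by rewrite EB -map_take -map_drop; apply: bal_map.
  split; first by rewrite T // c5.
  split; first lia.
  split; last by rewrite c8.
  move=> r0 Hr; have -> : r0 = (size A + (r0.-1 - size A)).+1 by lia.
  rewrite T; [rewrite c7 //; lia | lia].
-
  subst i.
  have -> : (leaves l).-1 = internal l by rewrite La.
  rewrite nth_cat Svl ltnn subnn [nth 0 (1 :: _) 0]/=.
  have [w [d [EA [Nw [W0 Wp]]]]] := Llast l 0.
  rewrite add0n in EA Nw.
  case/Xinv: Hp => [[p' -> [Hp' Ep]] | [p' -> [Hp' Ep]]]; last first.
    exfalso; have : X (leaves l) \in B by rewrite -Ep mem_nth.
    by move/memX; lia.
  have Ep' : p' = size w.
    move: Ep; rewrite /A EA nth_cat; case: ltnP => H Ep.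
      by rewrite -Ep mem_nth in Nw.
    move: Ep; case E: (p' - size w) => [|k] /= Ep; first by lia.
    by move: Ep; rewrite nth_nseq; case: ifP.
  subst p'.
  case: (posnP (internal l)) => Hl0.
    split; first by rewrite La Hl0.
    move=> HN; exfalso; apply: HN; split => //.
    by rewrite (W0 Hl0).
  have [Llw Hd] := Wp Hl0.
  have Hw : 0 < size w by move: Llw; case: (w).
  have SA1 : size A = size w + d.+1 by rewrite /A EA size_cat /= size_nseq.
  split.
    move=> [_ HL]; exfalso.
    have E1 : (size w).+1.-1 = ((size w).-1).+1 by lia.
    rewrite E1 nthA in HL; last by lia.
    have Hlt : (size w).-1 < size w by lia.
    rewrite /A EA nth_cat Hlt (set_nth_default LP) // nth_last in HL.
    by rewrite HL in Llw.
  move=> HN.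
  have [W [EA2 BW]] := @Lbody l 0 Hl0.
  have [c [rest EA3]] := Lfirst l 0.
  have Hc : 0 < c.
    case: c EA3 => // EA3; rewrite EA2 in EA3; discriminate.
  have SA2 : size A = (size W).+2 by rewrite /A EA2 /= size_cat /= addn1.
  have SA3 : size A = c + (size rest).+1 by rewrite /A EA3 size_cat size_nseq.
  exists (size A), 1, 1, c.+1.
  split; first lia.
  split.
    move=> r0 Hr; have -> : r0 = (r0.-1).+1 by lia.
    rewrite nthA; last by lia.
    rewrite /A EA nth_cat ltnNge (_ : size w <= r0.-1) /=; last by lia.
    have -> : r0.-1 - size w = ((r0.-1 - size w).-1).+1 by lia.
    by rewrite /= nth_nseq (_ : (r0.-1 - size w).-1 < d) //; lia.
  split.
    have -> : (size A).+1 = (size A + 0).+1 by rewrite addn0.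
    by rewrite nthB.
  split.
    split; first lia.
    split; first by rewrite /= !size_cat /=; lia.
    split; first by rewrite nthA; [rewrite /A EA2|lia].
    split.
      rewrite SA2 /A EA2 /= nth_cat size_cat /= addn1 ltnSn nth_cat ltnn subnn //.
    rewrite SA2 /A EA2 /= drop0 takel_cat; last by rewrite size_cat; lia.
    by rewrite takel_cat // take_size.
  split.
    rewrite nthA; last by lia.
    by rewrite /A EA3 nth_cat size_nseq ltnn subnn.
  split; first lia.
  split => //.
  move=> r0 Hr; have -> : r0 = r0.-1.+1 by lia.
  rewrite nthA; last by lia.
  have Hrc : r0.-1 < c by lia.
  by rewrite /A EA3 nth_cat size_nseq Hrc nth_nseq Hrc.
Qed.

Lemma name_ex t : exists v, name_of t v.
Proof.
elim: t => [|l [vl Hl] r [vr Hr]].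
  by exists [::]; split => // i p /=; lia.
by exists (vl ++ 1 :: map (fun x => x + leaves l) vr); apply: nameE.
Qed.

Theorem mainTheorem5 (n : nat) (v : seq nat) (k : nat) :
  1 <= n -> Nb n v ->
  1 <= k <= n -> nth 0 v k.-1 = 1 ->
  (forall j, k < j <= n -> nth 0 v j.-1 <> 1) ->
  (hatN n v <->
   (hatN k.-1 (take k.-1 v) /\
    hatN (n - k) (map (fun x => x - k) (drop k v)))).
Proof.
move=> Hn [Sv Hv] Hk Hvk Hmax; split.
- move=> [[|l r] [Ht Nt]]; first by rewrite /= in Ht; lia.
  have [vl Nl] := name_ex l; have [vr Nr] := name_ex r.
  have E := name_unique Nt (nameE Nl Nr).
  have La := leavesE l.
  have Svl : size vl = internal l by case: Nl.
  have Svr : size vr = internal r by case: Nr.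
  rewrite /= in Ht.
  have Va : nth 0 v (leaves l).-1 = 1 by rewrite E La /= nth_cat Svl ltnn subnn.
  have Vgt : forall j, leaves l < j <= n -> 1 < nth 0 v j.-1.
    move=> j Hj; rewrite E nth_cat Svl (_ : (j.-1 < internal l) = false); last by apply/negbTE; rewrite -leqNgt; lia.
    have -> : j.-1 - internal l = ((j - leaves l).-1).+1 by lia.
    rewrite /= (nth_map 0); last by rewrite Svr; lia.
    have := name_pos Nr (i := j - leaves l) ltac:(lia); lia.
  have Ek : k = leaves l.
    case: (ltngtP k (leaves l)) => H //.
      by case: (Hmax (leaves l)); [lia|].
    by have := Vgt k ltac:(lia); rewrite Hvk.
  subst k.
  split.
    exists l; split; first by rewrite La.
    by rewrite E La /= take_size_cat.
  exists r; split; first lia.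
  rewrite E La drop_cat Svl ltnNge leqnSn subSnn /= drop0 -map_comp map_id_in // => x _ /=; rewrite addnK.
  done.
- move=> [[l [Hl Nl]] [r [Hr Nr]]].
  exists (Node l r); split; first by rewrite /=; lia.
  have La := leavesE l.
  have Lk : leaves l = k by rewrite La Hl; lia.
  have Hge : forall x, x \in drop k v -> k < x.
    move=> x /(nthP 0) [y Hy <-].
    have := name_pos Nr (i := y.+1) ltac:(rewrite size_drop Sv in Hy; lia).
    by rewrite /= (nth_map 0) // subn_gt0.
  have -> : v = take k.-1 v ++ 1 :: map (fun x => x + leaves l) (map (fun x => x - k) (drop k v)).
    rewrite -map_comp Lk map_id_in; last first.
      by move=> x /Hge Hx /=; rewrite subnK // ltnW.
    rewrite -{1}(cat_take_drop k.-1 v) (drop_nth 0); last by lia.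
    rewrite Hvk prednK //; lia.
  exact: nameE.
Qed.
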